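(* Let $h:\Gamma\to\mathbb{T}A$ be a connected parametrized tropical curve without contracted edges, $\mathcal{Q}=\{p_1,\dots,p_x\}$ a lifting set, and $\tilde h:\widetilde\Gamma\to N_\mathbb{R}$ the lifted planar tropical curve, with paired unbounded ends $e_i,f_i$ of outgoing slopes $n_i,-n_i$ coming from $p_i$ and with $\gamma_i\in\Lambda$ the class of the loop associated to the pair $(e_i,f_i)$ (projection of a path in $\widetilde\Gamma$ from $e_i$ to $f_i$). Then every small deformation of $h$ (in the same combinatorial type) lifts to a small deformation of $\tilde h$. Conversely, a small deformation of $\tilde h$ (same combinatorial type, same slopes) descends to a deformation of $h:\Gamma\to\mathbb{T}A$ if and only if for every $i=1,\dots,x$ it satisfies $$\det(n_i,e_i)+\det(-n_i,f_i)=\det(n_i,S\gamma_i),$$ where $\det(n,e)$ denotes the moment $\det(n,z)$, $z\in\tilde h(e)$, of an unbounded end $e$ of slope $n$.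
   Context: $N$ is an oriented rank $2$ lattice, $N_\mathbb{R}=N\otimes\mathbb{R}$. A tropical torus is $\mathbb{T}A=N_\mathbb{R}/\Lambda$ with injective $S:\Lambda\to N_\mathbb{R}$ whose image is a full-rank lattice. A parametrized tropical curve $h:\Gamma\to\mathbb{T}A$ is a map from a compact connected finite metric graph, affine on edges with slopes in $N$, balanced at each vertex; an edge is contracted if its slope is $0$. A finite set $\mathcal{Q}$ of points in the interiors of edges of $\Gamma$ is lifting if $h_*:\pi_1(\Gamma\setminus\mathcal{Q})\to\pi_1(\mathbb{T}A)=\Lambda$ is trivial; the lift $\tilde h:\widetilde\Gamma\to N_\mathbb{R}$ is obtained by lifting $h|_{\Gamma\setminus\mathcal{Q}}$ to $N_\mathbb{R}$ and prolonging each cut half-edge to an unbounded ray of the same slope. A deformation is a continuous family of parametrized tropical curves of the same combinatorial type (same graph, same slopes, varying edge lengths and position). *)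

(* Defs.v *)
From HB Require Import structures.
From mathcomp Require Import all_boot all_order all_algebra.
From mathcomp Require Import all_classical all_reals all_analysis.
Set Implicit Arguments. Unset Strict Implicit. Unset Printing Implicit Defensive.
Import Order.TTheory GRing.Theory Num.Theory.
Local Open Scope ring_scope.
Local Open Scope classical_set_scope.
Import numFieldNormedType.Exports.

(*  N = Z^2 (oriented by the standard determinant), N_R = R^2 = R * R.  *)
(*  Lambda = Z^2, and S : Lambda -> N_R is given by the images S1, S2   *)
(*  of the standard basis; S injective with full-rank image  <=>        *)
(*  det(S1,S2) <> 0.                                                    *)
(*  A finite graph Gamma: vertex finType V, edge finType E, each edge   *)
(*  oriented from src e to tgt e (loops and multi-edges allowed).       *)

Definition vec (R : realType) := (R * R)%type.
Definition ivec := (int * int)%type.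

Definition vadd {R : realType} (a b : vec R) : vec R := (a.1 + b.1, a.2 + b.2).
Definition vopp {R : realType} (a : vec R) : vec R := (- a.1, - a.2).
Definition vsub {R : realType} (a b : vec R) : vec R := vadd a (vopp b).
Definition vscale {R : realType} (c : R) (a : vec R) : vec R := (c * a.1, c * a.2).
Definition vzero {R : realType} : vec R := (0, 0).

Definition ivR {R : realType} (n : ivec) : vec R := (n.1%:~R, n.2%:~R).
Definition iopp (n : ivec) : ivec := (- n.1, - n.2)%R.

Definition det2 {R : realType} (a b : vec R) : R := a.1 * b.2 - a.2 * b.1.

Definition Slat {R : realType} (S1 S2 : vec R) (g : ivec) : vec R :=
  vadd (vscale g.1%:~R S1) (vscale g.2%:~R S2).

Definition in_lattice {R : realType} (S1 S2 : vec R) (z : vec R) : Prop :=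
  exists g : ivec, z = Slat S1 S2 g.

Definition torus_data {R : realType} (S1 S2 : vec R) : Prop := det2 S1 S2 != 0.

(* balancing: at each vertex the sum of outgoing slopes vanishes; the
   outgoing slope of e is w e at src e and -(w e) at tgt e. *)
Definition balanced {V E : finType} (src tgt : E -> V) (w : E -> ivec) : Prop :=
  forall v : V,
    (\sum_(e | src e == v) (w e).1 - \sum_(e | tgt e == v) (w e).1 = 0)%R /\
    (\sum_(e | src e == v) (w e).2 - \sum_(e | tgt e == v) (w e).2 = 0)%R.

Definition no_contracted {E : finType} (w : E -> ivec) : Prop :=
  forall e, w e != (0, 0)%R.

Definition adj {V E : finType} (src tgt : E -> V) : rel V :=
  fun a b => [exists e, ((src e == a) && (tgt e == b)) || ((src e == b) && (tgt e == a))].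
Definition graph_connected {V E : finType} (src tgt : E -> V) : Prop :=
  forall a b : V, connect (adj src tgt) a b.

(* A parametrized tropical curve h : Gamma -> TA with slopes w and edge
   lengths l, represented by chosen lifts x v in N_R of the images of the
   vertices: edge e is mapped to t |-> [x (src e) + t w e], t in [0, l e],
   which must end at [x (tgt e)] in TA = N_R / S(Lambda). *)
Definition torus_curve {R : realType} {V E : finType} (S1 S2 : vec R)
    (src tgt : E -> V) (w : E -> ivec) (l : E -> R) (x : V -> vec R) : Prop :=
  (forall e, 0 < l e) /\
  (forall e, in_lattice S1 S2 (vsub (x (tgt e)) (vadd (x (src e)) (vscale (l e) (ivR (w e)))))) /\
  balanced src tgt w.

(* The lifted planar curve htilde : Gammatilde -> N_R for a set Q of cut
   edges (each edge of Q carries exactly one point of the lifting set).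
   Gammatilde has vertex set V, bounded edges the e \notin Q (with the
   same slopes), and for each e \in Q two unbounded ends: e_i at src e of
   outgoing slope w e and f_i at tgt e of outgoing slope -(w e). *)
Definition planar_curve {R : realType} {V E : finType}
    (src tgt : E -> V) (Q : {set E}) (w : E -> ivec) (lt : E -> R) (y : V -> vec R) : Prop :=
  forall e, e \notin Q -> 0 < lt e /\ y (tgt e) = vadd (y (src e)) (vscale (lt e) (ivR (w e))).

Definition is_lift {R : realType} {V E : finType} (S1 S2 : vec R)
    (src tgt : E -> V) (Q : {set E}) (w : E -> ivec) (l : E -> R)
    (x : V -> vec R) (lt : E -> R) (y : V -> vec R) : Prop :=
  (forall v, in_lattice S1 S2 (vsub (y v) (x v))) /\
  (forall e, e \notin Q -> lt e = l e) /\
  planar_curve src tgt Q w lt y.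

(* Q is a lifting set: h_* is trivial on pi_1(Gamma \ Q), i.e. (covering
   theory) h restricted to Gamma \ Q lifts to N_R. *)
Definition lifting_set {R : realType} {V E : finType} (S1 S2 : vec R)
    (src tgt : E -> V) (Q : {set E}) (w : E -> ivec) (l : E -> R) (x : V -> vec R) : Prop :=
  exists y : V -> vec R, is_lift S1 S2 src tgt Q w l x l y.

(* walks in Gammatilde (through bounded edges, i.e. edges not in Q);
   an oriented edge (e, true) is traversed from src e to tgt e,
   (e, false) from tgt e to src e. *)
Definition ostart {V E : Type} (src tgt : E -> V) (o : E * bool) : V :=
  if o.2 then src o.1 else tgt o.1.
Definition oend {V E : Type} (src tgt : E -> V) (o : E * bool) : V :=
  if o.2 then tgt o.1 else src o.1.

Fixpoint walk_in {V E : finType} (src tgt : E -> V) (Q : {set E})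
    (a : V) (s : seq (E * bool)) (b : V) : Prop :=
  match s with
  | [::] => a = b
  | o :: s' => o.1 \notin Q /\ ostart src tgt o = a /\ walk_in src tgt Q (oend src tgt o) s' b
  end.

Definition walk_disp {R : realType} {E : Type} (w : E -> ivec) (l : E -> R)
    (s : seq (E * bool)) : vec R :=
  foldr (fun o acc => vadd (if o.2 then vscale (l o.1) (ivR (w o.1))
                                   else vopp (vscale (l o.1) (ivR (w o.1)))) acc) vzero s.

Definition cont_on {R : realType} (d : R) (f : R -> R) : Prop :=
  {within `[0, d], continuous f}.
Definition vcont_on {R : realType} (d : R) (f : R -> vec R) : Prop :=
  cont_on d (fun t => (f t).1) /\ cont_on d (fun t => (f t).2).

(* A deformation of h (same combinatorial type: same graph, same slopes,
   varying lengths and positions) over the parameter interval [0, d],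
   starting at h.  (A continuous path in TA lifts to N_R, so the vertex
   images are represented by continuous lifts starting at x.) *)
Definition torus_deformation {R : realType} {V E : finType} (S1 S2 : vec R)
    (src tgt : E -> V) (w : E -> ivec) (l : E -> R) (x : V -> vec R) (d : R)
    (L : R -> E -> R) (X : R -> V -> vec R) : Prop :=
  L 0 = l /\ X 0 = x /\
  (forall e, cont_on d (fun t => L t e)) /\ (forall v, vcont_on d (fun t => X t v)) /\
  (forall t, 0 <= t <= d -> torus_curve S1 S2 src tgt w (L t) (X t)).

Definition planar_deformation {R : realType} {V E : finType}
    (src tgt : E -> V) (Q : {set E}) (w : E -> ivec) (lt : E -> R) (y : V -> vec R) (d : R)
    (Lt : R -> E -> R) (Y : R -> V -> vec R) : Prop :=
  (forall e, e \notin Q -> Lt 0 e = lt e) /\ Y 0 = y /\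
  (forall e, e \notin Q -> cont_on d (fun t => Lt t e)) /\
  (forall v, vcont_on d (fun t => Y t v)) /\
  (forall t, 0 <= t <= d -> planar_curve src tgt Q w (Lt t) (Y t)).

(* Main.v *)
Require Import Defs.
From HB Require Import structures.
From mathcomp Require Import all_boot all_order all_algebra.
From mathcomp Require Import all_classical all_reals all_analysis.
From mathcomp Require Import zify ring lra.
Import Order.TTheory GRing.Theory Num.Theory.
Local Open Scope ring_scope.
Local Open Scope classical_set_scope.
Import numFieldNormedType.Exports.
Section Helpers.
Local Open Scope classical_set_scope.

Lemma cont_sub {R : realType} d d' (f : R -> R) : d' <= d -> cont_on d f -> cont_on d' f.
Proof.
move=> hd; apply: continuous_subspaceW => t /=; rewrite !in_itv /= => /andP[a b].
by rewrite a (le_trans b hd).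
Qed.

Lemma no_half (R : realType) (k : int) : k%:~R <> (1/2 : R).
Proof.
move=> hk.
have h1 : (0 : R) < k%:~R by rewrite hk; lra.
have h2 : (k%:~R : R) < 1 by rewrite hk; lra.
rewrite ltr0z in h1. rewrite ltrz1 in h2. lia.
Qed.

Lemma int_const {R : realType} d (u : R -> R) : cont_on d u ->
  (forall t, 0 <= t <= d -> exists z : int, u t = z%:~R) ->
  forall t, 0 <= t <= d -> u t = u 0.
Proof.
move=> hu hz t /andP[t0 td].
have d0 : 0 <= d by exact: le_trans td.
have [z0 e0] := hz 0 ltac:(by rewrite lexx d0).
have [zt et] := hz t ltac:(by rewrite t0 td).
have hut : cont_on t u := @cont_sub _ d t u td hu.
case: (ltrgtP zt z0) => hc; last by rewrite et e0 hc.
- have hv : Num.min (u 0) (u t) <= z0%:~R - 1/2 <= Num.max (u 0) (u t).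
    rewrite e0 et; apply/andP; split.
    + rewrite ge_min; apply/orP; right.
      have : zt <= z0 - 1 by lia.
      rewrite -(ler_int R) intrD => h; lra.
    + rewrite le_max; apply/orP; left; lra.
  have [c cin uc] := IVT t0 hut hv.
  move: cin; rewrite in_itv /= => /andP[c0 ct].
  have [zc ec] := hz c ltac:(by rewrite c0 (le_trans ct td)).
  apply: False_ind; apply: (@no_half R (z0 - zc)).
  rewrite intrB -ec uc; lra.
- have hv : Num.min (u 0) (u t) <= z0%:~R + 1/2 <= Num.max (u 0) (u t).
    rewrite e0 et; apply/andP; split.
    + rewrite ge_min; apply/orP; left; lra.
    + rewrite le_max; apply/orP; right.
      have : z0 + 1 <= zt by lia.
      rewrite -(ler_int R) intrD => h; lra.
  have [c cin uc] := IVT t0 hut hv.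
  move: cin; rewrite in_itv /= => /andP[c0 ct].
  have [zc ec] := hz c ltac:(by rewrite c0 (le_trans ct td)).
  apply: False_ind; apply: (@no_half R (zc - z0)).
  rewrite intrB -ec uc; lra.
Qed.

Lemma cont_add {R : realType} d (f g : R -> R) : cont_on d f -> cont_on d g -> cont_on d (fun t => f t + g t).
Proof. by move=> hf hg t; exact: (continuousD (hf t) (hg t)). Qed.
Lemma cont_cst {R : realType} d (c : R) : cont_on d (fun _ => c).
Proof. by move=> t; apply: cst_continuous. Qed.
Lemma cont_mul {R : realType} d (f g : R -> R) : cont_on d f -> cont_on d g -> cont_on d (fun t => f t * g t).
Proof. by move=> hf hg t; exact: (continuousM (hf t) (hg t)). Qed.
Lemma cont_opp {R : realType} d (f : R -> R) : cont_on d f -> cont_on d (fun t => - f t).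
Proof. by move=> hf t; exact: (continuousN (hf t)). Qed.
Lemma cont_mulc {R : realType} d (f : R -> R) (c : R) : cont_on d f -> cont_on d (fun t => f t * c).
Proof. by move=> hf; apply: cont_mul => //; apply: cont_cst. Qed.

Lemma pair_eq {R : Type} (a b : R * R) : a.1 = b.1 -> a.2 = b.2 -> a = b.
Proof. by case: a; case: b => ? ? ? ? /= -> ->. Qed.

Lemma lat_const {R : realType} (S1 S2 : vec R) d (f : R -> vec R) : torus_data S1 S2 ->
  vcont_on d f -> (forall t, 0 <= t <= d -> in_lattice S1 S2 (f t)) ->
  forall t, 0 <= t <= d -> f t = f 0.
Proof.
move=> hD [h1 h2] hl.
have hD' : S1.1 * S2.2 - S1.2 * S2.1 != 0 by exact: hD.
pose u1 t := ((f t).1 * S2.2 - (f t).2 * S2.1) / (S1.1 * S2.2 - S1.2 * S2.1).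
pose u2 t := (S1.1 * (f t).2 - S1.2 * (f t).1) / (S1.1 * S2.2 - S1.2 * S2.1).
have c1 : cont_on d u1.
  apply: cont_mulc; apply: cont_add; first exact: cont_mulc.
  by apply: cont_opp; apply: cont_mulc.
have c2 : cont_on d u2.
  apply: cont_mulc; apply: cont_add.
    by move=> t; exact: (continuousM (cont_cst d S1.1 t) (h2 t)).
  by apply: cont_opp => t; exact: (continuousM (cont_cst d S1.2 t) (h1 t)).
have i1 : forall t, 0 <= t <= d -> exists z : int, u1 t = z%:~R.
  move=> t /hl [g E]; exists g.1; rewrite /u1 E /Slat /vadd /vscale /=; field; exact: hD'.
have i2 : forall t, 0 <= t <= d -> exists z : int, u2 t = z%:~R.
  move=> t /hl [g E]; exists g.2; rewrite /u2 E /Slat /vadd /vscale /=; field; exact: hD'.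
have e1 := @int_const R d u1 c1 i1; have e2 := @int_const R d u2 c2 i2.
have rec : forall t, f t = (u1 t * S1.1 + u2 t * S2.1, u1 t * S1.2 + u2 t * S2.2).
  move=> t; apply: pair_eq; rewrite /u1 /u2 /=; field; exact: hD'.
move=> t ht; have -> := rec t; have -> := rec 0; by rewrite e1 // e2.
Qed.

Lemma cont_near0 {R : realType} d (f : R -> R) c : cont_on d f -> 0 <= d -> f 0 < c ->
  \forall t \near (0:R), 0 <= t <= d -> f t < c.
Proof.
move=> hf d0 fc.
have A0 : `[0, d] 0 by rewrite /= in_itv /= lexx d0.
have := cvgr_lt _ (hf 0) _ fc.
move=> H; have : nbhs_subspace (A := `[0,d]) 0 (fun t => f t < c) by exact: H. clear H.
by rewrite -nbhs_subspace_in.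
Qed.

Lemma near0_eps {R : realType} (P : R -> Prop) : (\forall t \near (0:R), P t) ->
  exists2 e : R, 0 < e & forall t, `|t| < e -> P t.
Proof.
move=> /nbhs_ballP [e e0 H]; exists e => // t te; apply: H.
by rewrite /ball /= sub0r normrN.
Qed.

End Helpers.
Arguments cont_sub {R d d' f}.
Arguments cont_add {R d f g}.
Arguments cont_mul {R d f g}.
Arguments cont_opp {R d f}.
Arguments cont_mulc {R d f c}.

Section Lat.
Variable R : realType.
Variables S1 S2 : vec R.

Lemma lat_add a b : in_lattice S1 S2 a -> in_lattice S1 S2 b -> in_lattice S1 S2 (vadd a b).
Proof.
move=> [ga ->] [gb ->]; exists (ga.1 + gb.1, ga.2 + gb.2)%R.
apply: pair_eq; rewrite /Slat /vadd /vscale /= !intrD; ring.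
Qed.

Lemma lat_opp a : in_lattice S1 S2 a -> in_lattice S1 S2 (vopp a).
Proof.
move=> [ga ->]; exists (- ga.1, - ga.2)%R.
apply: pair_eq; rewrite /Slat /vopp /vadd /vscale /= !intrN; ring.
Qed.

Lemma lat_eq a b : in_lattice S1 S2 a -> a = b -> in_lattice S1 S2 b.
Proof. by move=> h <-. Qed.

End Lat.
Arguments lat_add {R S1 S2 a b}.
Arguments lat_opp {R S1 S2 a}.
Arguments lat_eq {R S1 S2 a b}.

Lemma walk_lemma {R : realType} {V E : finType} (src tgt : E -> V) (Q : {set E})
  (w : E -> ivec) (lt : E -> R) (y : V -> vec R) :
  planar_curve src tgt Q w lt y ->
  forall s a b, walk_in src tgt Q a s b -> walk_disp w lt s = vsub (y b) (y a).
Proof.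
move=> hp; elim=> [|o s IH] a b /=.
  by move=> ->; apply: pair_eq; rewrite /vzero /vsub /vadd /vopp /=; ring.
move=> [hq [hs hw]]; rewrite (IH _ _ hw) {IH hw}.
have [_ Ee] := hp _ hq.
move: hs; rewrite /ostart /oend; case: o.2 => /= <-.
  rewrite Ee; apply: pair_eq; rewrite /vsub /vadd /vopp /vscale /=; ring.
rewrite Ee; apply: pair_eq; rewrite /vsub /vadd /vopp /vscale /=; ring.
Qed.
Theorem mainTheorem4 (R : realType) (S1 S2 : vec R) (V E : finType)
    (src tgt : E -> V) (w : E -> ivec) (l : E -> R) (x : V -> vec R)
    (Q : {set E}) (y : V -> vec R)
    (P : E -> seq (E * bool)) (gamma : E -> ivec) :
  torus_data S1 S2 ->
  torus_curve S1 S2 src tgt w l x ->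
  graph_connected src tgt ->
  no_contracted w ->
  lifting_set S1 S2 src tgt Q w l x ->
  is_lift S1 S2 src tgt Q w l x l y ->
  (* P e : a path in Gammatilde from f_e (at tgt e) back to e_e (at src e);
     gamma e : class in Lambda of the loop crossing from e_e to f_e
     through the cut point on e and returning along P e *)
  (forall e, e \in Q -> walk_in src tgt Q (tgt e) (P e) (src e)) ->
  (forall e, e \in Q ->
     Slat S1 S2 (gamma e) = vadd (vscale (l e) (ivR (w e))) (walk_disp w l (P e))) ->
  (* (1) every small deformation of h lifts to a small deformation of htilde *)
  (forall (d : R) (L : R -> E -> R) (X : R -> V -> vec R), 0 < d ->
     torus_deformation S1 S2 src tgt w l x d L X ->
     exists d' : R, 0 < d' <= d /\
       exists (Lt : R -> E -> R) (Y : R -> V -> vec R),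
         planar_deformation src tgt Q w l y d' Lt Y /\
         forall t, 0 <= t <= d' -> is_lift S1 S2 src tgt Q w (L t) (X t) (Lt t) (Y t)) /\
  (* (2) a small deformation of htilde descends iff the moment conditions hold *)
  (forall (d : R) (Lt : R -> E -> R) (Y : R -> V -> vec R), 0 < d ->
     planar_deformation src tgt Q w l y d Lt Y ->
     ((exists d' : R, 0 < d' <= d /\
        exists (L : R -> E -> R) (X : R -> V -> vec R),
          torus_deformation S1 S2 src tgt w l x d' L X /\
          forall t, 0 <= t <= d' -> is_lift S1 S2 src tgt Q w (L t) (X t) (Lt t) (Y t))
      <->
      (exists d' : R, 0 < d' <= d /\
        forall t, 0 <= t <= d' -> forall e, e \in Q ->
          det2 (ivR (w e)) (Y t (src e)) + det2 (ivR (iopp (w e))) (Y t (tgt e))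
          = det2 (ivR (w e)) (Slat S1 S2 (gamma e))))).
Proof.
move=> hD [lpos [xlat bal]] _ hnc _ [hyx [_ hyp]] hP hgam.
have K0 : forall e, e \notin Q -> y (tgt e) = vadd (y (src e)) (vscale (l e) (ivR (w e))).
  by move=> e /hyp [].
split.
- move=> d L X d0 [L0 [X0 [Lc [Xc Xcur]]]].
  exists d; split; first by rewrite d0 lexx.
  pose Y := fun t v => vadd (X t v) (vsub (y v) (x v)).
  have HY : forall t, 0 <= t <= d -> planar_curve src tgt Q w (L t) (Y t).
    move=> t ht e he.
    have [lp [xl _]] := Xcur t ht.
    split; first exact: lp.
    pose F := fun t => vsub (X t (tgt e)) (vadd (X t (src e)) (vscale (L t e) (ivR (w e)))).
    have vc : vcont_on d F.
      split; rewrite /F /vsub /vadd /vopp /vscale /=; apply: cont_add; try exact: (Xc _).1; try exact: (Xc _).2;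
      apply: cont_opp; apply: cont_add; try exact: (Xc _).1; try exact: (Xc _).2; apply: cont_mulc; exact: Lc.
    have vl : forall s, 0 <= s <= d -> in_lattice S1 S2 (F s).
      by move=> s hs; have [_ [xl' _]] := Xcur s hs; exact: xl'.
    have := @lat_const R S1 S2 d F hD vc vl t ht.
    have Ky := K0 e he.
    rewrite /F /= L0 X0 => Ef.
    have E1 := congr1 fst Ef; have E2 := congr1 snd Ef; have K1 := congr1 fst Ky; have K2 := congr1 snd Ky.
    move: E1 E2 K1 K2; rewrite /Y /vsub /vadd /vopp /vscale /= => E1 E2 K1 K2.
    apply: pair_eq => /=; lra.
  exists L, Y; split.
  + split; first by move=> e _; rewrite L0.
    split.
      apply: funext => v; rewrite /Y X0; apply: pair_eq; rewrite /vadd /vsub /vopp /=; ring.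
    split; first by move=> e _; exact: Lc.
    split; last exact: HY.
    move=> v; split; rewrite /Y /vadd /vsub /vopp /=; apply: cont_add; try exact: (Xc v).1; try exact: (Xc v).2; exact: cont_cst.
  + move=> t ht; split.
      move=> v; apply: (lat_eq (hyx v)); apply: pair_eq; rewrite /Y /vadd /vsub /vopp /=; ring.
    split; [done | exact: HY t ht].
- move=> d Lt Y d0 [Lt0 [Y0 [Ltc [Yc Ycur]]]]; split.
  + move=> [d' [/andP[d'0 d'd] [L [X [[L0 [X0 [Lc [Xc Xcur]]]] hlt]]]]].
    exists d'; split; first by rewrite d'0 d'd.
    move=> t ht e he.
    pose F := fun t => vsub (Y t (tgt e)) (vadd (Y t (src e)) (vscale (L t e) (ivR (w e)))).
    have vc : vcont_on d' F.
      split; rewrite /F /vsub /vadd /vopp /vscale /=; apply: cont_add;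
        try exact: (cont_sub d'd (Yc _).1); try exact: (cont_sub d'd (Yc _).2);
      apply: cont_opp; apply: cont_add;
        try exact: (cont_sub d'd (Yc _).1); try exact: (cont_sub d'd (Yc _).2);
      apply: cont_mulc; exact: Lc.
    have vl : forall s, 0 <= s <= d' -> in_lattice S1 S2 (F s).
      move=> s hs; have [hyX [_ _]] := hlt s hs; have [_ [xl' _]] := Xcur s hs.
      apply: (lat_eq (lat_add (lat_add (hyX (tgt e)) (xl' e)) (lat_opp (hyX (src e))))).
      apply: pair_eq; rewrite /F /vsub /vadd /vopp /vscale /=; ring.
    have := @lat_const R S1 S2 d' F hD vc vl t ht; rewrite /F /= L0 Y0 => Ef.
    have Wk := @walk_lemma R V E src tgt Q w l y hyp _ _ _ (hP e he).
    rewrite (hgam e he) Wk.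
    have E1 := congr1 fst Ef; have E2 := congr1 snd Ef.
    move: E1 E2; rewrite /vsub /vadd /vopp /vscale /= => E1 E2.
    have E1' : (Y t (tgt e)).1 = (Y t (src e)).1 + L t e * (w e).1%:~R + (y (tgt e)).1 - ((y (src e)).1 + l e * (w e).1%:~R) by lra.
    have E2' : (Y t (tgt e)).2 = (Y t (src e)).2 + L t e * (w e).2%:~R + (y (tgt e)).2 - ((y (src e)).2 + l e * (w e).2%:~R) by lra.
    rewrite /det2 /ivR /iopp /vadd /vsub /vopp /vscale /= !intrN E1' E2'; ring.
  + move=> [d1 [/andP[d10 d1d] hm]].
    pose a e : R := (w e).1%:~R; pose b e : R := (w e).2%:~R.
    pose D1 e t := ((Y t (tgt e)).1 - (Y t (src e)).1) - ((y (tgt e)).1 - (y (src e)).1).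
    pose D2 e t := ((Y t (tgt e)).2 - (Y t (src e)).2) - ((y (tgt e)).2 - (y (src e)).2).
    pose mu e t := (a e * D1 e t + b e * D2 e t) / (a e ^+ 2 + b e ^+ 2).
    have nz : forall e, a e ^+ 2 + b e ^+ 2 != 0.
      move=> e; rewrite paddr_eq0 ?sqr_ge0 // !sqrf_eq0 /a /b !intr_eq0.
      apply/negP => /andP[/eqP h1 /eqP h2]; move/negP: (hnc e); apply.
      by apply/eqP; rewrite [w e]surjective_pairing h1 h2.
    have cD1 : forall e, cont_on d (D1 e).
      move=> e; exact: (cont_add (cont_add (Yc (tgt e)).1 (cont_opp (Yc (src e)).1)) (cont_cst d _)).
    have cD2 : forall e, cont_on d (D2 e).
      move=> e; exact: (cont_add (cont_add (Yc (tgt e)).2 (cont_opp (Yc (src e)).2)) (cont_cst d _)).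
    have muc : forall e, cont_on d (mu e).
      move=> e; exact: (cont_mulc (cont_add (cont_mul (cont_cst d (a e)) (cD1 e)) (cont_mul (cont_cst d (b e)) (cD2 e)))).
    have mu0 : forall e, mu e 0 = 0.
      by move=> e; rewrite /mu /D1 /D2 Y0 !subrr !mulr0 addr0 mul0r.
    have muE : forall t, 0 <= t <= d1 -> forall e, e \in Q ->
        D1 e t = mu e t * a e /\ D2 e t = mu e t * b e.
      move=> t ht e he; have := hm t ht e he.
      have Wk := @walk_lemma R V E src tgt Q w l y hyp _ _ _ (hP e he).
      rewrite (hgam e he) Wk /det2 /ivR /iopp /vadd /vsub /vopp /vscale /= !intrN => H.
      have rel : a e * D2 e t = b e * D1 e t by rewrite /a /b /D1 /D2; lra.
      split; rewrite /mu mulrAC -[LHS]mulr1 -(divff (nz e)) mulrA; congr (_ / _).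
        transitivity (a e * (a e * D1 e t) + b e * (b e * D1 e t)); first by ring.
        by rewrite -rel; ring.
      transitivity (a e * (a e * D2 e t) + b e * (b e * D2 e t)); first by ring.
      by rewrite rel; ring.
    have NE : \forall t \near (0:R), forall e, 0 <= t <= d -> - mu e t < l e.
      have H : forall e, \forall t \near (0:R), 0 <= t <= d -> - mu e t < l e.
        move=> e; apply: (@cont_near0 R d (fun t => - mu e t) (l e)); first exact: cont_opp.
          exact: ltW.
        by rewrite mu0 oppr0; exact: lpos.
      exact: (filter_forall _ H).
    have [eps eps0 Heps] := @near0_eps R _ NE.
    pose d' := Num.min d1 (eps / 2).
    have d'd1 : d' <= d1 by rewrite ge_min lexx.
    have d'e : d' <= eps / 2 by rewrite ge_min lexx orbT.
    have d'0 : 0 < d' by rewrite lt_min d10 divr_gt0.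
    have d'd : d' <= d by exact: le_trans d1d.
    exists d'; split; first by rewrite d'0 d'd.
    pose L t e := if e \in Q then l e + mu e t else Lt t e.
    pose X t v := vadd (Y t v) (vsub (x v) (y v)).
    exists L, X; split.
    * split.
        apply: funext => e; rewrite /L; case: (boolP (e \in Q)) => h.
          by rewrite mu0 addr0.
        exact: Lt0.
      split.
        apply: funext => v; rewrite /X Y0; apply: pair_eq; rewrite /vadd /vsub /vopp /=; ring.
      split.
        move=> e; rewrite /L; case: (boolP (e \in Q)) => h.
          exact: (cont_sub d'd (cont_add (cont_cst d (l e)) (muc e))).
        exact: (cont_sub d'd (Ltc e h)).
      split.
        move=> v; split; rewrite /X /vadd /vsub /vopp /=; apply: cont_add;
          try exact: (cont_sub d'd (Yc v).1); try exact: (cont_sub d'd (Yc v).2); exact: cont_cst.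
      move=> t /andP[t0 td'].
      have htd : 0 <= t <= d by rewrite t0 (le_trans td' d'd).
      have htd1 : 0 <= t <= d1 by rewrite t0 (le_trans td' d'd1).
      split.
        move=> e; rewrite /L; case: (boolP (e \in Q)) => h.
          have := Heps t _ e htd; rewrite ger0_norm // => H.
          have : - mu e t < l e by apply: H; lra.
          move=> H'; lra.
        exact: (Ycur t htd e h).1.
      split; last exact: bal.
      move=> e; apply: (lat_eq (xlat e)); rewrite /L; case: (boolP (e \in Q)) => h.
        have [m1 m2] := muE t htd1 e h; move: m1 m2.
        rewrite /D1 /D2 /a /b => m1 m2.
        apply: pair_eq; rewrite /X /vadd /vsub /vopp /vscale /ivR /=; lra.
      have [_ Ee] := Ycur t htd e h; have Ky := K0 e h.
      have E1 := congr1 fst Ee; have E2 := congr1 snd Ee; have K1 := congr1 fst Ky; have K2 := congr1 snd Ky.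
      move: E1 E2 K1 K2; rewrite /vsub /vadd /vopp /vscale /= => E1 E2 K1 K2.
      apply: pair_eq; rewrite /X /vadd /vsub /vopp /vscale /ivR /=; lra.
    * move=> t /andP[t0 td'].
      have htd : 0 <= t <= d by rewrite t0 (le_trans td' d'd).
      split.
        move=> v; apply: (lat_eq (hyx v)); apply: pair_eq; rewrite /X /vadd /vsub /vopp /=; ring.
      split; last exact: Ycur t htd.
      by move=> e h; rewrite /L (negbTE h).
Qed.
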